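(* Let $n\ge 4$ be even, let $K_n=(V,E)$ be the complete graph on $n$ nodes and let $P_{\mathrm{perfmatch}}(n)=\operatorname{conv}\{\chi(M): M \text{ a perfect matching in } K_n\}\subseteq\mathbb{R}^E$, whose circuits are taken with respect to the linear description $$\bm{x}(\delta(S))\ge 1\ \ \text{for all } S\subset V,\ |S|\text{ odd},\ |S|\ge 3;\qquad \bm{x}(\delta(v))=1\ \ \text{for all } v\in V;\qquad \bm{x}\ge\bm{0}.$$ Then $$\mathcal{CD}(P_{\mathrm{perfmatch}}(n))=\begin{cases}1 & n=4,6,\\ 2 & n=8,\\ 1 & n\ge 10.\end{cases}$$
   Context: $\chi(M)\in\{0,1\}^E$ is the characteristic vector of $M$; $\delta(S)$ is the set of edges with exactly one endpoint in $S$, $\delta(v)=\delta(\{v\})$, and $\bm{x}(F)=\sum_{e\in F}x_e$. Circuits: for a polytope $P=\{\bm{x}: A\bm{x}=\bm{b},\ B\bm{x}\le \bm{d}\}$ given by a fixed linear system, a nonzero vector $\bm{g}$ is a circuit of $P$ if $A\bm{g}=\bm{0}$ and $\operatorname{supp}(B\bm{g})$ is inclusion-minimal among the sets $\operatorname{supp}(B\bm{y})$ with $A\bm{y}=\bm{0}$, $\bm{y}\neq\bm{0}$ (inequalities of the form $\ge$ are rewritten as $\le$). A point $\bm{x}''\in P$ is one circuit step from $\bm{x}'\in P$ if $\bm{x}''=\bm{x}'+\alpha\bm{c}$ for a circuit $\bm{c}$ and $\alpha>0$ maximal such that $\bm{x}'+\alpha\bm{c}\in P$. A circuit walk of length $l$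 from $\bm{x}'$ to $\bm{x}''$ is a sequence $\bm{x}'=\bm{z}^0,\dots,\bm{z}^l=\bm{x}''$ in $P$ with each $\bm{z}^i$ one circuit step from $\bm{z}^{i-1}$; the circuit distance is the length of a shortest such walk, and the circuit diameter $\mathcal{CD}(P)$ is the maximum circuit distance over all ordered pairs of vertices of $P$. *)

(* Defs.v *)
From HB Require Import structures.
From mathcomp Require Import all_boot all_order all_algebra.
From mathcomp Require Import reals.
Set Implicit Arguments. Unset Strict Implicit. Unset Printing Implicit Defensive.
Import Order.TTheory GRing.Theory Num.Theory.
Local Open Scope ring_scope.

Definition edge (n : nat) := {e : 'I_n * 'I_n | (e.1 < e.2)%N}.

Definition incident n (v : 'I_n) (e : edge n) : bool :=
  ((val e).1 == v) || ((val e).2 == v).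

Definition in_cut n (S : {set 'I_n}) (e : edge n) : bool :=
  ((val e).1 \in S) != ((val e).2 \in S).

Definition perfect_matching n (M : {set edge n}) : Prop :=
  forall v : 'I_n, #|[set e in M | incident v e]| = 1%N.

Definition chi (R : realType) n (M : {set edge n}) : edge n -> R :=
  fun e => if e \in M then 1 else 0.

Definition in_Pperf (R : realType) n (x : edge n -> R) : Prop :=
  exists lam : {set edge n} -> R,
    (forall M, 0 <= lam M) /\
    (forall M, ~ perfect_matching M -> lam M = 0) /\
    \sum_M lam M = 1 /\
    (forall e, x e = \sum_M lam M * chi R M e).

Definition is_vertex (R : realType) n (x : edge n -> R) : Prop :=
  in_Pperf x /\
  forall y z : edge n -> R, in_Pperf y -> in_Pperf z ->
    forall t : R, 0 < t -> t < 1 ->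
      (forall e, x e = t * y e + (1 - t) * z e) -> y = z.

(* Linear description:
     x(delta(S)) >= 1   for S subset V, |S| odd, |S| >= 3     (rows inl S)
     x(delta(v)) = 1    for v in V                            (equalities A)
     x_e >= 0           for e in E                            (rows inr e)
   Inequality rows written as <= are -x(delta(S)) <= -1, -x_e <= 0. *)
Definition ineq_row n (r : {set 'I_n} + edge n) : bool :=
  match r with
  | inl T => [&& odd #|T|, (3 <= #|T|)%N & T \proper [set: 'I_n]]
  | inr _ => true
  end.

Definition Brow (R : realType) n (g : edge n -> R) (r : {set 'I_n} + edge n) : R :=
  match r with
  | inl T => - \sum_(e | in_cut T e) g e
  | inr e => - g e
  end.

Definition kerA (R : realType) n (g : edge n -> R) : Prop :=
  forall v : 'I_n, \sum_(e | incident v e) g e = 0.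

Definition suppB (R : realType) n (g : edge n -> R) : {set {set 'I_n} + edge n} :=
  [set r | ineq_row r && (Brow g r != 0)].

Definition nonzero (R : realType) n (g : edge n -> R) : Prop := exists e, g e != 0.

Definition circuit (R : realType) n (g : edge n -> R) : Prop :=
  kerA g /\ nonzero g /\
  forall y : edge n -> R, kerA y -> nonzero y ->
    suppB y \subset suppB g -> suppB y = suppB g.

Definition circuit_step (R : realType) n (x' x'' : edge n -> R) : Prop :=
  exists (c : edge n -> R) (alpha : R),
    circuit c /\ 0 < alpha /\
    in_Pperf (fun e => x' e + alpha * c e) /\
    (forall beta : R, alpha < beta -> ~ in_Pperf (fun e => x' e + beta * c e)) /\
    x'' = (fun e => x' e + alpha * c e).

Definition circuit_walk (R : realType) n (l : nat) (x y : edge n -> R) : Prop :=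
  exists z : nat -> (edge n -> R),
    z 0%N = x /\ z l = y /\
    (forall i, (i <= l)%N -> in_Pperf (z i)) /\
    (forall i, (i < l)%N -> circuit_step (z i) (z i.+1)).

Definition circuit_diameter_Pperf (R : realType) (n k : nat) : Prop :=
  (forall x y : edge n -> R, is_vertex x -> is_vertex y ->
     exists2 l, (l <= k)%N & circuit_walk l x y) /\
  (exists x y : edge n -> R, is_vertex x /\ is_vertex y /\
     forall l, (l < k)%N -> ~ circuit_walk l x y).

(* Main.v *)
Require Import Defs.
From HB Require Import structures.
From mathcomp Require Import all_boot all_order all_algebra.
From mathcomp Require Import reals.
From mathcomp Require Import zify ring lra.
From Stdlib Require Import Classical FunctionalExtensionality.
Set Implicit Arguments. Unset Strict Implicit. Unset Printing Implicit Defensive.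
Import Order.TTheory GRing.Theory Num.Theory.
Local Open Scope ring_scope.

Definition inside n (S : {set 'I_n}) (e : edge n) : bool :=
  ((val e).1 \in S) && ((val e).2 \in S).
Definition Mof n (f : 'I_n -> 'I_n) : {set edge n} :=
  [set e | f (val e).1 == (val e).2].
Definition invol n (f : 'I_n -> 'I_n) := (forall x, f (f x) = x) /\ (forall x, f x != x).
Definition other n (e : edge n) (v : 'I_n) : 'I_n :=
  if (val e).1 == v then (val e).2 else (val e).1.

Lemma edge_neq n (e : edge n) : (val e).1 != (val e).2.
Proof. case: e => [[a b] /= h]; apply/eqP => E; by move: h; rewrite E ltnn. Qed.

Lemma edge_uniq n (a b : 'I_n) (e e' : edge n) : a != b ->
  incident a e -> incident b e -> incident a e' -> incident b e' -> e = e'.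
Proof.
move=> ab; case: e => [[x1 x2] /= h]; case: e' => [[y1 y2] /= h'].
rewrite /incident /= => /orP[]/eqP ea /orP[]/eqP eb /orP[]/eqP ea' /orP[]/eqP eb';
  subst; first [by rewrite eqxx in ab | by apply: val_inj
               | by move: (ltn_trans h h'); rewrite ltnn].
Qed.

Lemma exE n (a b : 'I_n) : a != b -> exists e : edge n, incident a e && incident b e.
Proof.
move=> ab; case: (ltngtP a b) => h.
- by exists (exist _ (a, b) h : edge n); rewrite /incident /= !eqxx orbT.
- by exists (exist _ (b, a) h : edge n); rewrite /incident /= !eqxx orbT.
- by move: ab; rewrite (val_inj h) eqxx.
Qed.

Lemma in_Mof n (f : 'I_n -> 'I_n) (e : edge n) : (e \in Mof f) = (f (val e).1 == (val e).2).
Proof. by rewrite inE. Qed.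

Lemma invol_eq n (f : 'I_n -> 'I_n) x y : invol f -> (f x == y) = (f y == x).
Proof. by case=> ff _; apply/eqP/eqP => <-; rewrite ff. Qed.

Lemma Mof_ends n (f : 'I_n -> 'I_n) a b (e : edge n) : invol f -> a != b ->
  incident a e -> incident b e -> (e \in Mof f) = (f a == b).
Proof.
move=> fi ab; rewrite in_Mof /incident.
have := edge_neq e.
move=> ne /orP[]/eqP ea /orP[]/eqP eb; subst; rewrite ?eqxx in ab ne => //.
all: try by rewrite (invol_eq _ _ fi).
Qed.

Lemma incident_other n (e : edge n) v : incident v e ->
  incident (other e v) e /\ other e v != v /\ other e (other e v) = v.
Proof.
have ne := edge_neq e; have ne' : (val e).2 != (val e).1 by rewrite eq_sym.
rewrite /incident /other => /orP[]/eqP <-.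
- by rewrite !eqxx orbT (negbTE ne) ne'.
- by rewrite (negbTE ne) !eqxx.
Qed.

Lemma incident_Mof n (f : 'I_n -> 'I_n) v (e : edge n) : invol f ->
  incident v e -> e \in Mof f -> incident (f v) e.
Proof.
case=> ff _; rewrite in_Mof /incident => /orP[]/eqP <- /eqP E.
  by rewrite E eqxx orbT.
by rewrite -E ff eqxx.
Qed.

Lemma pm_Mof n (f : 'I_n -> 'I_n) : invol f -> perfect_matching (Mof f).
Proof.
move=> fi v; have [ff fne] := fi.
have vf : v != f v by rewrite eq_sym fne.
have [e /andP[ve fe]] := exE vf.
suff -> : [set e' in Mof f | incident v e'] = [set e] by rewrite cards1.
apply/setP => e'; rewrite !inE; apply/andP/eqP.
- case=> e'M ve'; apply: (edge_uniq vf) => //.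
  by apply: (incident_Mof fi) => //; rewrite in_Mof.
- move=> ->; split => //; rewrite -in_Mof (Mof_ends fi vf) //.
Qed.

Lemma pm_set1 n (M : {set edge n}) v : perfect_matching M ->
  exists e0, [set e in M | incident v e] = [set e0].
Proof. by move=> pm; apply/cards1P; rewrite pm. Qed.

Lemma pm_uniq n (M : {set edge n}) v e e' : perfect_matching M ->
  e \in M -> e' \in M -> incident v e -> incident v e' -> e = e'.
Proof.
move=> pm eM e'M ve ve'; have [e0 E] := pm_set1 v pm.
have : e \in [set e in M | incident v e] by rewrite inE eM.
have : e' \in [set e in M | incident v e] by rewrite inE e'M.
by rewrite E !inE => /eqP -> /eqP ->.
Qed.

Lemma pm_ex n (M : {set edge n}) v : perfect_matching M -> exists e, (e \in M) && incident v e.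
Proof.
move=> pm; have [e0 E] := pm_set1 v pm.
have : e0 \in [set e in M | incident v e] by rewrite E set11.
by rewrite inE; exists e0.
Qed.

Lemma invol_of_pm n (M : {set edge n}) : perfect_matching M ->
  exists f : 'I_n -> 'I_n, invol f /\ M = Mof f.
Proof.
move=> pm.
pose f v := if [pick e in M | incident v e] is Some e then other e v else v.
have fspec v : exists e, [/\ e \in M, incident v e & f v = other e v].
  rewrite /f; case: pickP => [e /andP[eM ve] | none]; first by exists e.
  by have [e /andP[eM ve]] := pm_ex v pm; move: (none e); rewrite eM ve.
have ff v : f (f v) = v.
  have [e [eM ve ->]] := fspec v; have [oe [_ ooe]] := incident_other ve.
  have [e' [e'M ve' ->]] := fspec (other e v).
  by rewrite (pm_uniq pm e'M eM ve' oe).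
have fne v : f v != v.
  by have [e [eM ve ->]] := fspec v; have [_ [? _]] := incident_other ve.
exists f; split => //; apply/setP => e; rewrite in_Mof.
have ve1 : incident (val e).1 e by rewrite /incident eqxx.
have [e' [e'M ve' ->]] := fspec (val e).1.
apply/idP/idP.
- move=> eM; rewrite (pm_uniq pm e'M eM ve' ve1) /other eqxx //.
- move=> /eqP E; have [oe [one _]] := incident_other ve'.
  have ve2 : incident (val e).2 e by rewrite /incident eqxx orbT.
  by rewrite -(edge_uniq (edge_neq e) ve' _ ve1 ve2) // -E.
Qed.

Lemma chi_sum (R : realType) n (M : {set edge n}) (P : pred (edge n)) :
  \sum_(e | P e) chi R M e = (#|[set e in M | P e]|)%:R.
Proof.
rewrite /chi -big_mkcondr /= -sumr_const; apply: eq_bigl => e.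
by rewrite !inE andbC.
Qed.

Lemma inP_nonneg (R : realType) n (x : edge n -> R) : in_Pperf x -> forall e, 0 <= x e.
Proof.
case=> lam [l0 [lpm [ls xe]]] e; rewrite xe; apply: sumr_ge0 => M _.
by apply: mulr_ge0 => //; rewrite /chi; case: ifP.
Qed.

Lemma inP_deg (R : realType) n (x : edge n -> R) : in_Pperf x ->
  forall v, \sum_(e | incident v e) x e = 1.
Proof.
case=> lam [l0 [lpm [ls xe]]] v.
rewrite (eq_bigr _ (fun e _ => xe e)) exchange_big /= -{}ls.
apply: eq_bigr => M _; rewrite -mulr_sumr chi_sum.
case: (classic (perfect_matching M)) => [pm | npm]; first by rewrite pm mulr1.
by rewrite lpm // mul0r.
Qed.

Lemma chi_in (R : realType) n (M : {set edge n}) : perfect_matching M -> in_Pperf (chi R M).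
Proof.
move=> pm; exists (fun M0 => if M0 == M then 1 else 0); split; [|split; [|split]].
- by move=> M0; case: ifP.
- by move=> M0 npm; case: eqP => // E; case: npm; rewrite E.
- by rewrite -big_mkcond big_pred1_eq.
- move=> e; rewrite (bigD1 M) //= eqxx mul1r big1 ?addr0 // => M0 /negbTE ->.
  by rewrite mul0r.
Qed.

Lemma eq_chi (R : realType) n (M : {set edge n}) (w : edge n -> R) :
  perfect_matching M -> in_Pperf w -> (forall e, e \notin M -> w e = 0) -> w = chi R M.
Proof.
move=> pm wP H; apply: functional_extensionality => e.
case eM: (e \in M); rewrite /chi eM; last by apply: H; rewrite eM.
have := inP_deg wP (val e).1.
rewrite (bigD1 e) /= ?/incident ?eqxx // big1 ?addr0 // => e' /andP[ve' ne'].
apply: H; apply/negP => e'M; move/negP: ne'; apply; apply/eqP.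
by apply: (pm_uniq pm e'M eM ve'); rewrite /incident eqxx.
Qed.

Lemma chi_vertex (R : realType) n (M : {set edge n}) : perfect_matching M -> is_vertex (chi R M).
Proof.
move=> pm; split; first exact: chi_in.
move=> y z yP zP t t0 t1 E.
have y0 := inP_nonneg yP; have z0 := inP_nonneg zP.
have H e : e \notin M -> y e = 0 /\ z e = 0.
  move=> eM; have := E e; rewrite /chi (negbTE eM) => /esym/eqP.
  have ty : 0 <= t * y e by apply: mulr_ge0; [exact: ltW|].
  have tz : 0 <= (1 - t) * z e by apply: mulr_ge0; [rewrite subr_ge0 ltW|].
  rewrite paddr_eq0 // => /andP[a b]; split.
    by move: a; rewrite mulf_eq0 (gt_eqF t0) => /eqP.
  by move: b; rewrite mulf_eq0 subr_eq0 eq_sym (lt_eqF t1) => /eqP.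
have -> : y = chi R M by apply: eq_chi => // e /H[].
by apply/esym; apply: eq_chi => // e /H[].
Qed.

Lemma vertex_chi (R : realType) n (x : edge n -> R) : is_vertex x ->
  exists M, perfect_matching M /\ x = chi R M.
Proof.
case=> xP ext; have xP' := xP; case: xP' => lam [l0 [lpm [ls xe]]].
have [M lM] : exists M, 0 < lam M.
  case: (classic (exists M, 0 < lam M)) => // H; exfalso.
  have : \sum_M lam M = 0.
    apply: big1 => M _; apply/eqP; rewrite eq_le l0 andbT leNgt; apply/negP => h.
    by apply: H; exists M.
  by rewrite ls => /eqP; rewrite oner_eq0.
have pmM : perfect_matching M.
  by case: (classic (perfect_matching M)) => // np; move: lM; rewrite lpm // ltxx.
exists M; split => //.
have sD : lam M + \sum_(M0 | M0 != M) lam M0 = 1 by rewrite -ls [RHS](bigD1 M).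
have xD e : x e = lam M * chi R M e + \sum_(M0 | M0 != M) lam M0 * chi R M0 e.
  by rewrite xe [LHS](bigD1 M).
have rest0 : 0 <= \sum_(M0 | M0 != M) lam M0 by apply: sumr_ge0.
case: (eqVneq (lam M) 1) => [l1 | ln1].
- apply: functional_extensionality => e; rewrite xD l1 mul1r.
  have : \sum_(M0 | M0 != M) lam M0 = 0 by apply: (addrI (lam M)); rewrite sD l1 addr0.
  move=> S0; have H0 := psumr_eq0P (fun i _ => l0 i) S0.
  by rewrite big1 ?addr0 // => M0 nM; rewrite H0 ?mul0r.
- have t1 : lam M < 1.
    by rewrite lt_neqAle ln1 /= -sD lerDl.
  set t := lam M.
  have nt : 1 - t != 0 by rewrite subr_eq0 eq_sym.
  pose lam' M0 := if M0 == M then 0 else lam M0 / (1 - t).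
  pose z e := \sum_M0 lam' M0 * chi R M0 e.
  have zP : in_Pperf z.
    exists lam'; split; [|split; [|split]] => //.
    - move=> M0; rewrite /lam'; case: ifP => // _; apply: divr_ge0 => //.
      by rewrite subr_ge0 ltW.
    - by move=> M0 np; rewrite /lam'; case: ifP => // _; rewrite lpm // mul0r.
    - rewrite (bigD1 M) //= /lam' eqxx add0r.
      rewrite (eq_bigr (fun M0 => lam M0 / (1 - t))); last by move=> M0 /negbTE ->.
      rewrite -mulr_suml.
      have -> : \sum_(M0 | M0 != M) lam M0 = 1 - t by rewrite -sD addrC addKr.
      by rewrite divff.
  have xz e : x e = t * chi R M e + (1 - t) * z e.
    rewrite xD /z [in RHS](bigD1 M) //= /lam' eqxx mul0r add0r mulr_sumr; congr (_ + _).
    apply: eq_bigr => M0 /negbTE ->; rewrite mulrA [_ * (_ / _)]mulrC divfK //.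
  have := ext _ _ (chi_in R pmM) zP t lM t1 xz.
  move=> Ez; apply: functional_extensionality => e; rewrite xz -Ez.
  by rewrite -mulrDl addrC subrK mul1r.
Qed.

Lemma walk0 (R : realType) n (x : edge n -> R) : in_Pperf x -> circuit_walk 0 x x.
Proof. by move=> xP; exists (fun _ => x); split => //; split => //; split. Qed.

Lemma walk1 (R : realType) n (x y : edge n -> R) :
  in_Pperf x -> in_Pperf y -> circuit_step x y -> circuit_walk 1 x y.
Proof.
move=> xP yP s; exists (fun i => if i == 0%N then x else y).
split => //; split => //; split; first by case.
by case.
Qed.

Lemma walk_cat (R : realType) n l1 l2 (x y w : edge n -> R) :
  circuit_walk l1 x y -> circuit_walk l2 y w -> circuit_walk (l1 + l2) x w.
Proof.
case=> z1 [z10 [z1l [z1P z1s]]]; case=> z2 [z20 [z2l [z2P z2s]]].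
exists (fun i => if (i <= l1)%N then z1 i else z2 (i - l1)%N).
split; first by rewrite leq0n.
split.
  case: leqP => h.
    have l20 : l2 = 0%N by lia.
    by subst l2; rewrite addn0 z1l -z20 z2l.
  by rewrite addKn.
split.
  move=> i hi; case: leqP => h; first exact: z1P.
  by apply: z2P; lia.
move=> i hi; case: (ltngtP i l1) => h.
- exact: z1s.
- rewrite subSn; last by lia.
  by apply: z2s; lia.
- subst i; rewrite z1l -z20 subSn // subnn.
  by apply: z2s; lia.
Qed.

Definition gvec (R : realType) n (f f' : 'I_n -> 'I_n) : edge n -> R :=
  fun e => chi R (Mof f') e - chi R (Mof f) e.

Lemma kerA_g (R : realType) n (f f' : 'I_n -> 'I_n) : invol f -> invol f' -> kerA (gvec R f f').
Proof.
move=> fi fi' v; rewrite /gvec sumrB.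
by rewrite !(inP_deg (chi_in R (pm_Mof _))) // subrr.
Qed.

Lemma step_chi (R : realType) n (M M' : {set edge n}) :
  perfect_matching M -> perfect_matching M' -> (exists e, (e \in M) && (e \notin M')) ->
  circuit (fun e => chi R M' e - chi R M e) -> circuit_step (chi R M) (chi R M').
Proof.
move=> pm pm' [e0 /andP[e0M e0M']] ci.
have E : (fun e => chi R M e + 1 * (chi R M' e - chi R M e)) = chi R M'.
  by apply: functional_extensionality => e; rewrite mul1r addrC subrK.
exists (fun e => chi R M' e - chi R M e), 1; split => //; split => //.
split; first by rewrite E; exact: chi_in.
split => //.
move=> beta hb /inP_nonneg /(_ e0); rewrite /chi e0M (negbTE e0M').
rewrite sub0r mulrN mulr1 subr_ge0 => h.
by move: (lt_le_trans hb h); rewrite ltxx.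
Qed.

Lemma sum_one (R : realType) n (P : pred (edge n)) (h : edge n -> R) e1 :
  P e1 -> (forall e, P e -> e != e1 -> h e = 0) -> \sum_(e | P e) h e = h e1.
Proof. by move=> P1 H; rewrite (bigD1 e1) //= big1 ?addr0 // => e /andP[]; apply: H. Qed.

Lemma sum_two (R : realType) n (P : pred (edge n)) (h : edge n -> R) e1 e2 :
  P e1 -> P e2 -> e1 != e2 ->
  (forall e, P e -> e != e1 -> e != e2 -> h e = 0) -> \sum_(e | P e) h e = h e1 + h e2.
Proof.
move=> P1 P2 ne H; rewrite (bigD1 e1) //= (bigD1 e2) /=; last by rewrite P2 eq_sym.
by rewrite big1 ?addr0 // => e /andP[/andP[]]; apply: H.
Qed.

Lemma dcount (R : realType) n (S : {set 'I_n}) (h : edge n -> R) :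
  \sum_(v in S) \sum_(e | incident v e) h e =
  \sum_e h e * (((val e).1 \in S) + ((val e).2 \in S))%:R.
Proof.
rewrite (eq_bigr (fun v => \sum_e (if incident v e then h e else 0))); last first.
  by move=> v _; rewrite big_mkcond.
rewrite exchange_big /=; apply: eq_bigr => e _.
rewrite big_mkcond /=.
rewrite (eq_bigr (fun v => (if v == (val e).1 then ((val e).1 \in S)%:R * h e else 0)
   + (if v == (val e).2 then ((val e).2 \in S)%:R * h e else 0))); last first.
  move=> v _; rewrite /incident; have ne := edge_neq e.
  have ne' : (val e).2 != (val e).1 by rewrite eq_sym.
  case: (eqVneq v (val e).1) => [-> | n1].
    rewrite ?eqxx ?orbT ?(negbTE ne) ?(negbTE ne') /=.
    by case: (_ \in S); rewrite /= ?mul1r ?mul0r ?addr0 ?add0r ?orbT.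
  case: (eqVneq v (val e).2) => [-> | n2].
    rewrite ?eqxx ?orbT ?(negbTE ne) ?(negbTE ne') /=.
    by case: (_ \in S); rewrite /= ?mul1r ?mul0r ?addr0 ?add0r ?orbT.
  by rewrite /= addr0; case: (_ \in S).
rewrite big_split /= -!big_mkcond !big_pred1_eq natrD mulrDr.
by rewrite ![h e * _]mulrC.
Qed.

Definition inside_ n (S : {set 'I_n}) (e : edge n) := inside S e.

Lemma cut_inside (R : realType) n (z : edge n -> R) (S : {set 'I_n}) : kerA z ->
  \sum_(e | in_cut S e) z e = - (2%:R * \sum_(e | inside S e) z e).
Proof.
move=> zA; have := dcount S z.
rewrite big1 => [|v _]; last exact: zA.
have -> : \sum_e z e * (((val e).1 \in S) + ((val e).2 \in S))%:R =
    \sum_(e | in_cut S e) z e + 2%:R * \sum_(e | inside S e) z e.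
  rewrite mulr_sumr (big_mkcond (in_cut S)) (big_mkcond (inside S)) -big_split /=; apply: eq_bigr => e _.
  rewrite /in_cut /inside.
  by case: (_ \in S); case: (_ \in S) => /=; rewrite ?mulr0 ?mulr1 ?add0r ?addr0 // mulrC.
by move/esym/eqP; rewrite addr_eq0 => /eqP.
Qed.

Definition Yv (R : realType) n (y : edge n -> R) (a b : 'I_n) :=
  \sum_(e | incident a e && incident b e) y e.

Lemma Yv_edge (R : realType) n (y : edge n -> R) a b e :
  a != b -> incident a e -> incident b e -> Yv y a b = y e.
Proof.
move=> ab ae be; apply: sum_one; first by rewrite ae be.
move=> e' /andP[ae' be'] ne; case/eqP: ne.
exact: (edge_uniq ab).
Qed.

Lemma YvC (R : realType) n (y : edge n -> R) a b : Yv y a b = Yv y b a.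
Proof. by apply: eq_bigl => e; rewrite andbC. Qed.

Lemma caseA n (f f' : 'I_n -> 'I_n) a b w x :
  (forall x, f (f x) = x) -> (forall x, f' (f' x) = x) ->
  (forall x, f x <> x) -> (forall x, f' x <> x) ->
  f a <> f' a -> f b <> f' b -> a <> b -> a <> f' b -> f a <> b -> f a <> f' b ->
  w <> a -> w <> f a -> w <> b -> w <> f' b -> w <> f' a -> w <> f' (f a) ->
  w <> f b -> w <> f (f' b) ->
  x \in [:: a; f a; b; f' b; w] -> f x \in [:: a; f a; b; f' b; w] -> x = a \/ x = f a.
Proof.
move=> ff ff' fn fn' Da Db h1 h2 h3 h4 w1 w2 w3 w4 w5 w6 w7 w8.
have i1 := ff a; have i2 := ff (f a); have i3 := ff b; have i4 := ff (f' b); have i5 := ff w.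
have j1 := ff' a; have j2 := ff' (f a); have j3 := ff' b; have j4 := ff' (f' b); have j5 := ff' w.
have k1 := fn a; have k2 := fn (f a); have k3 := fn b; have k4 := fn (f' b); have k5 := fn w.
rewrite !inE => /orP[/eqP E|/orP[/eqP E|/orP[/eqP E|/orP[/eqP E|/eqP E]]]]; subst x;
  move=> /orP[/eqP E2|/orP[/eqP E2|/orP[/eqP E2|/orP[/eqP E2|/eqP E2]]]];
  first [by left | by right | exfalso; congruence].
Qed.

Lemma caseB n (f f' : 'I_n -> 'I_n) a b w x :
  (forall x, f (f x) = x) -> (forall x, f' (f' x) = x) ->
  (forall x, f x <> x) -> (forall x, f' x <> x) ->
  f a <> f' a -> f b <> f' b -> a <> b -> a <> f' b -> f a <> b -> f a <> f' b ->
  w <> a -> w <> f a -> w <> b -> w <> f' b -> w <> f' a -> w <> f' (f a) ->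
  w <> f b -> w <> f (f' b) ->
  x \in [:: a; f a; b; f' b; w] -> f' x \in [:: a; f a; b; f' b; w] -> x = b \/ x = f' b.
Proof.
move=> ff ff' fn fn' Da Db h1 h2 h3 h4 w1 w2 w3 w4 w5 w6 w7 w8.
have i1 := ff a; have i2 := ff (f a); have i3 := ff b; have i4 := ff (f' b); have i5 := ff w.
have j1 := ff' a; have j2 := ff' (f a); have j3 := ff' b; have j4 := ff' (f' b); have j5 := ff' w.
have k1 := fn' a; have k2 := fn' (f a); have k3 := fn' b; have k4 := fn' (f' b); have k5 := fn' w.
rewrite !inE => /orP[/eqP E|/orP[/eqP E|/orP[/eqP E|/orP[/eqP E|/eqP E]]]]; subst x;
  move=> /orP[/eqP E2|/orP[/eqP E2|/orP[/eqP E2|/orP[/eqP E2|/eqP E2]]]];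
  first [by left | by right | exfalso; congruence].
Qed.

Lemma inside_of n (S : {set 'I_n}) (a b : 'I_n) (e : edge n) :
  a \in S -> b \in S -> incident a e -> incident b e -> a != b -> inside S e.
Proof.
move=> aS bS; rewrite /incident /inside => /orP[]/eqP A /orP[]/eqP B ab.
all: try by rewrite A B aS bS.
all: by move: ab; rewrite -A -B eqxx.
Qed.

Lemma incident_pair n (f : 'I_n -> 'I_n) (e : edge n) x :
  (forall x, f (f x) = x) -> f (val e).1 = (val e).2 -> (val e).1 = x \/ (val e).1 = f x ->
  incident x e /\ incident (f x) e.
Proof.
move=> ff E [A|A]; rewrite /incident.
  by rewrite -A E !eqxx ?orbT.
have B : x = (val e).2 by rewrite -E A ff.
by rewrite -B -A !eqxx ?orbT.
Qed.

Lemma F2 (R : realType) n (f f' : 'I_n -> 'I_n) (y : edge n -> R) a b w :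
  invol f -> invol f' -> kerA y ->
  (forall e, gvec R f f' e = 0 -> y e = 0) ->
  (forall S, ineq_row (inl S) -> \sum_(e | in_cut S e) gvec R f f' e = 0 ->
     \sum_(e | in_cut S e) y e = 0) ->
  f a <> f' a -> f b <> f' b -> a <> b -> a <> f' b -> f a <> b -> f a <> f' b ->
  w \notin [:: a; f a; b; f' b; f' a; f' (f a); f b; f (f' b)] ->
  Yv y a (f a) + Yv y b (f' b) = 0.
Proof.
move=> fi fi' yA y0 yc Da Db h1 h2 h3 h4.
rewrite !inE !negb_or => /andP[/eqP w1 /andP[/eqP w2 /andP[/eqP w3 /andP[/eqP w4
  /andP[/eqP w5 /andP[/eqP w6 /andP[/eqP w7 /eqP w8]]]]]]].
have [ff fn] := fi; have [ff' fn'] := fi'.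
have fnP x : f x <> x by apply/eqP.
have fnP' x : f' x <> x by apply/eqP.
have afa : a != f a by rewrite eq_sym.
have bfb : b != f' b by rewrite eq_sym.
have [e1 /andP[ae1 fae1]] := exE afa.
have [e2 /andP[be2 fbe2]] := exE bfb.
set s := [:: a; f a; b; f' b; w].
set S := [set x in s].
have memS x : (x \in S) = (x \in s) by rewrite inE.
have hS : ineq_row (inl S).
  have cS : #|S| = 5%N.
    rewrite cardsE; apply/card_uniqP; rewrite /s /= !inE !negb_or.
    have i1 := ff a; have i2 := ff (f a); have i3 := ff b; have i4 := ff (f' b).
    have j1 := ff' a; have j3 := ff' b; have k1 := fnP a; have k3 := fnP' b.
    by repeat (apply/andP; split); try (apply/eqP; congruence).
  rewrite /= cS /= properT; apply/negP => /eqP ST.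
  have : f' a \in S by rewrite ST inE.
  rewrite memS !inE.
  have j1 := ff' a; have j3 := ff' b; have k1 := fnP' a.
  by move=> /orP[/eqP E|/orP[/eqP E|/orP[/eqP E|/orP[/eqP E|/eqP E]]]]; congruence.
set g := gvec R f f'.
have aS : a \in S by rewrite memS !inE eqxx ?orbT.
have faS : f a \in S by rewrite memS !inE eqxx ?orbT.
have bS : b \in S by rewrite memS !inE eqxx ?orbT.
have fbS : f' b \in S by rewrite memS !inE eqxx ?orbT.
have ins1 : inside S e1 := inside_of aS faS ae1 fae1 afa.
have ins2 : inside S e2 := inside_of bS fbS be2 fbe2 bfb.
have e1M : e1 \in Mof f by rewrite (Mof_ends fi afa ae1 fae1).
have e1M' : e1 \notin Mof f' by rewrite (Mof_ends fi' afa ae1 fae1); apply/eqP => E; apply: Da.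
have e2M' : e2 \in Mof f' by rewrite (Mof_ends fi' bfb be2 fbe2).
have e2M : e2 \notin Mof f by rewrite (Mof_ends fi bfb be2 fbe2); apply/eqP.
have e12 : e1 != e2 by apply/eqP => E; move: e2M; rewrite -E e1M.
have rest e : inside S e -> e != e1 -> e != e2 -> g e = 0.
  move=> /andP[i1 i2] n1 n2.
  have nM : e \notin Mof f.
    apply/negP => eM; move: (eM); rewrite in_Mof => /eqP E.
    have H : (val e).1 = a \/ (val e).1 = f a.
      apply: (caseA (x:=(val e).1) ff ff' fnP fnP' Da Db h1 h2 h3 h4 w1 w2 w3 w4 w5 w6 w7 w8).
        by rewrite -/s -memS.
      by rewrite E -/s -memS.
    have [ia ifa] := incident_pair ff E H.
    move: n1; rewrite (edge_uniq afa ia ifa ae1 fae1) ?eqxx //.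
  have nM' : e \notin Mof f'.
    apply/negP => eM; move: (eM); rewrite in_Mof => /eqP E.
    have H : (val e).1 = b \/ (val e).1 = f' b.
      apply: (caseB (x:=(val e).1) ff ff' fnP fnP' Da Db h1 h2 h3 h4 w1 w2 w3 w4 w5 w6 w7 w8).
        by rewrite -/s -memS.
      by rewrite E -/s -memS.
    have [ia ifa] := incident_pair ff' E H.
    move: n2; rewrite (edge_uniq bfb ia ifa be2 fbe2) ?eqxx //.
  by rewrite /g /gvec /chi (negbTE nM) (negbTE nM') subrr.
have gin : \sum_(e | inside S e) g e = 0.
  rewrite (sum_two ins1 ins2 e12 rest) /g /gvec /chi (negbTE e1M') e1M e2M' (negbTE e2M).
  by rewrite sub0r subr0 addNr.
have gcut : \sum_(e | in_cut S e) g e = 0.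
  by rewrite (cut_inside _ (kerA_g R fi fi')) gin mulr0 oppr0.
have ycut := yc S hS gcut.
have yin : \sum_(e | inside S e) y e = 0.
  move: ycut; rewrite (cut_inside _ yA) => /eqP; rewrite oppr_eq0 mulf_eq0.
  by rewrite pnatr_eq0 /= => /eqP.
rewrite (Yv_edge _ afa ae1 fae1) (Yv_edge _ bfb be2 fbe2) -yin.
apply/esym/sum_two => // e ie ne1 ne2; apply: y0; exact: rest.
Qed.

Definition Hcond n (f f' : 'I_n -> 'I_n) : Prop :=
  forall a b, f a <> f' a -> f b <> f' b -> a <> b -> a <> f' b -> f a <> b -> f a <> f' b ->
   f' a <> f b -> f' a <> f (f' b) -> f' (f a) <> f b -> f' (f a) <> f (f' b) ->
   exists w, w \notin [:: a; f a; b; f' b; f' a; f' (f a); f b; f (f' b)].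

Lemma Dv_f n (f f' : 'I_n -> 'I_n) x : invol f -> invol f' ->
  f x <> f' x -> f (f x) <> f' (f x).
Proof. by move=> [ff _] [ff' _] Dx; rewrite ff => E; apply: Dx; rewrite {2}E ff'. Qed.

Lemma Dv_f' n (f f' : 'I_n -> 'I_n) x : invol f -> invol f' ->
  f x <> f' x -> f (f' x) <> f' (f' x).
Proof. by move=> [ff _] [ff' _] Dx; rewrite ff' => E; apply: Dx; rewrite -{1}E ff. Qed.

Lemma key (R : realType) n (f f' : 'I_n -> 'I_n) (phi : 'I_n -> R) :
  invol f -> invol f' -> Hcond f f' ->
  (forall x, phi (f x) = phi x) -> (forall x, f x <> f' x -> phi (f' x) = phi x) ->
  (forall a b w, f a <> f' a -> f b <> f' b -> a <> b -> a <> f' b -> f a <> b -> f a <> f' b ->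
     w \notin [:: a; f a; b; f' b; f' a; f' (f a); f b; f (f' b)] -> phi a = phi b) ->
  forall a b, f a <> f' a -> f b <> f' b -> phi a = phi b.
Proof.
move=> fi fi' H pf pf' F a b Da Db.
have Dfa := Dv_f fi fi' Da; have Dfb := Dv_f' fi fi' Db.
case: (eqVneq a b) => [->//|/eqP h1].
case: (eqVneq a (f' b)) => [->|/eqP h2]; first by rewrite (pf' b Db).
case: (eqVneq (f a) b) => [<-|/eqP h3]; first by rewrite pf.
case: (eqVneq (f a) (f' b)) => [E|/eqP h4]; first by rewrite -(pf a) E (pf' b Db).
case: (eqVneq (f' a) (f b)) => [E|/eqP h5]; first by rewrite -(pf' a Da) E pf.
case: (eqVneq (f' a) (f (f' b))) => [E|/eqP h6].
  by rewrite -(pf' a Da) E pf (pf' b Db).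
case: (eqVneq (f' (f a)) (f b)) => [E|/eqP h7].
  by rewrite -(pf a) -(pf' _ Dfa) E pf.
case: (eqVneq (f' (f a)) (f (f' b))) => [E|/eqP h8].
  by rewrite -(pf a) -(pf' _ Dfa) E pf (pf' b Db).
have [w hw] := H a b Da Db h1 h2 h3 h4 h5 h6 h7 h8.
exact: F hw.
Qed.

Lemma crit (R : realType) n (f f' : 'I_n -> 'I_n) : invol f -> invol f' -> Hcond f f' ->
  (exists x, f x != f' x) -> circuit (gvec R f f').
Proof.
move=> fi fi' H [x0 hx0].
have [ff fn] := fi; have [ff' fn'] := fi'.
set g := gvec R f f'.
have gval a e : f a != f' a -> incident a e -> incident (f a) e -> g e = -1.
  move=> Da ia ifa; have afa : a != f a by rewrite eq_sym fn.
  rewrite /g /gvec /chi (Mof_ends fi afa ia ifa) (Mof_ends fi' afa ia ifa) eqxx.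
  by rewrite eq_sym (negbTE Da) sub0r.
have gval' a e : f a != f' a -> incident a e -> incident (f' a) e -> g e = 1.
  move=> Da ia ifa; have afa : a != f' a by rewrite eq_sym fn'.
  rewrite /g /gvec /chi (Mof_ends fi afa ia ifa) (Mof_ends fi' afa ia ifa) eqxx.
  by rewrite (negbTE Da) subr0.
split; first exact: kerA_g.
split.
  have afa : x0 != f x0 by rewrite eq_sym fn.
  have [e0 /andP[i1 i2]] := exE afa.
  by exists e0; rewrite (gval x0) // oppr_eq0 oner_eq0.
move=> y yA ynz sub.
have ya e : g e = 0 -> y e = 0.
  move=> ge; apply/eqP; apply: contraT => hy.
  have : inr e \in suppB y by rewrite inE /= oppr_eq0 hy.
  by move/(subsetP sub); rewrite inE /= oppr_eq0 ge eqxx.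
have yc S : ineq_row (inl S) -> \sum_(e | in_cut S e) g e = 0 ->
    \sum_(e | in_cut S e) y e = 0.
  move=> hS hg; apply/eqP; apply: contraT => hy.
  have : inl S \in suppB y by rewrite inE hS /= oppr_eq0 hy.
  by move/(subsetP sub); rewrite inE hS /= oppr_eq0 hg eqxx.
have F1 x : f x != f' x -> Yv y x (f x) + Yv y x (f' x) = 0.
  move=> Dx; have xf : x != f x by rewrite eq_sym fn.
  have xf' : x != f' x by rewrite eq_sym fn'.
  have [e1 /andP[a1 b1]] := exE xf; have [e2 /andP[a2 b2]] := exE xf'.
  rewrite (Yv_edge _ xf a1 b1) (Yv_edge _ xf' a2 b2).
  have e1M : e1 \in Mof f by rewrite (Mof_ends fi xf a1 b1).
  have e2M : e2 \notin Mof f by rewrite (Mof_ends fi xf' a2 b2).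
  have e12 : e1 != e2 by apply/eqP => E; move: e2M; rewrite -E e1M.
  have := yA x; rewrite (sum_two (P := incident x) (h := y) a1 a2 e12) //.
  move=> e ie n1 n2; apply: ya.
  have nM : e \notin Mof f.
    apply/negP => eM; move/eqP: n1; apply.
    exact: (edge_uniq xf ie (incident_Mof fi ie eM) a1 b1).
  have nM' : e \notin Mof f'.
    apply/negP => eM; move/eqP: n2; apply.
    exact: (edge_uniq xf' ie (incident_Mof fi' ie eM) a2 b2).
  by rewrite /g /gvec /chi (negbTE nM) (negbTE nM') subrr.
pose phi x := Yv y x (f x).
have pf x : phi (f x) = phi x by rewrite /phi ff YvC.
have pf' x : f x <> f' x -> phi (f' x) = phi x.
  move=> Dx; have Dx' := Dv_f' fi fi' Dx.
  have := F1 _ (introN eqP Dx'); rewrite ff' => E1.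
  have F1x := F1 _ (introN eqP Dx).
  rewrite /phi; apply: (addIr (Yv y x (f' x))).
  by rewrite {1}(YvC y x (f' x)) E1 F1x.
have F2' a b w : f a <> f' a -> f b <> f' b -> a <> b -> a <> f' b -> f a <> b ->
    f a <> f' b -> w \notin [:: a; f a; b; f' b; f' a; f' (f a); f b; f (f' b)] ->
    phi a = phi b.
  move=> Da Db h1 h2 h3 h4 hw.
  have E := F2 fi fi' yA ya yc Da Db h1 h2 h3 h4 hw.
  have F1b := F1 _ (introN eqP Db).
  by rewrite /phi; apply: (addIr (Yv y b (f' b))); rewrite E F1b.
have K := key fi fi' H pf pf' F2'.
have Dx0 : f x0 <> f' x0 by apply/eqP.
set c := phi x0.
have yE e : y e = - c * g e.
  case M1 : (e \in Mof f); case M2 : (e \in Mof f').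
  - have g0 : g e = 0 by rewrite /g /gvec /chi M1 M2 subrr.
    by rewrite g0 mulr0 ya.
  - move: M1 M2; rewrite !in_Mof => /eqP E1 /negbT M2.
    have Da : f (val e).1 != f' (val e).1 by rewrite E1 eq_sym.
    have ia : incident (val e).1 e by rewrite /incident eqxx.
    have ifa : incident (f (val e).1) e by rewrite /incident E1 eqxx orbT.
    have afa : (val e).1 != f (val e).1 by rewrite eq_sym fn.
    rewrite (gval _ _ Da ia ifa) mulrN1 opprK -(Yv_edge y afa ia ifa).
    by rewrite -/(phi _) /c (K _ _ (elimN eqP Da) Dx0).
  - move: M1 M2; rewrite !in_Mof => /negbT M1 /eqP E2.
    have Da : f (val e).1 != f' (val e).1 by rewrite E2.
    have ia : incident (val e).1 e by rewrite /incident eqxx.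
    have ifa : incident (f' (val e).1) e by rewrite /incident E2 eqxx orbT.
    have afa : (val e).1 != f' (val e).1 by rewrite eq_sym fn'.
    rewrite (gval' _ _ Da ia ifa) mulr1 -(Yv_edge y afa ia ifa).
    have := F1 _ Da; rewrite -/(phi _) (K _ _ (elimN eqP Da) Dx0) -/c => /eqP.
    by rewrite addrC addr_eq0 => /eqP.
  - have g0 : g e = 0 by rewrite /g /gvec /chi M1 M2 subrr.
    by rewrite g0 mulr0 ya.
have c0 : c != 0.
  apply/negP => /eqP c0; case: ynz => e; rewrite yE c0 oppr0 mul0r eqxx //.
apply/setP => r; rewrite !inE; congr (_ && _).
have -> : Brow y r = - c * Brow g r.
  case: r => [T|e] /=; last by rewrite yE mulrN.
  by rewrite (eq_bigr _ (fun e _ => yE e)) -mulr_sumr mulrN.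
by rewrite mulf_eq0 oppr_eq0 (negbTE c0).
Qed.

Lemma step (R : realType) n (f f' : 'I_n -> 'I_n) : invol f -> invol f' -> Hcond f f' ->
  exists2 l, (l <= 1)%N & circuit_walk l (chi R (Mof f)) (chi R (Mof f')).
Proof.
move=> fi fi' H.
have pm := pm_Mof fi; have pm' := pm_Mof fi'.
case: (pickP (fun x => f x != f' x)) => [x0 hx0 | none].
- exists 1%N => //; apply: walk1; [exact: chi_in | exact: chi_in |].
  apply: step_chi => //; last exact: (crit R fi fi' H (ex_intro _ x0 hx0)).
  have [ff fn] := fi.
  have afa : x0 != f x0 by rewrite eq_sym fn.
  have [e0 /andP[i1 i2]] := exE afa.
  exists e0; rewrite (Mof_ends fi afa i1 i2) (Mof_ends fi' afa i1 i2) eqxx /=.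
  by rewrite eq_sym.
- have -> : f' = f.
    apply: functional_extensionality => x; move: (none x) => /= /negbFE /eqP //.
  by exists 0%N => //; apply: walk0; exact: chi_in.
Qed.

Lemma crit_card n (f f' : 'I_n -> 'I_n) : invol f -> invol f' ->
  (#|[set x | f x != f' x]| < 8)%N \/ (8 < n)%N -> Hcond f f'.
Proof.
move=> [ff fn] [ff' fn'] C a b Da Db h1 h2 h3 h4 h5 h6 h7 h8.
set s := [:: a; f a; b; f' b; f' a; f' (f a); f b; f (f' b)].
case: C => C.
- exfalso.
  have fnP x : f x <> x by apply/eqP.
  have fnP' x : f' x <> x by apply/eqP.
  have i1 := ff a; have i2 := ff (f a); have i3 := ff b; have i4 := ff (f' b).
  have i5 := ff (f' a); have i6 := ff (f' (f a)); have i7 := ff (f b); have i8 := ff (f (f' b)).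
  have j1 := ff' a; have j2 := ff' (f a); have j3 := ff' b; have j4 := ff' (f' b).
  have j5 := ff' (f' a); have j6 := ff' (f' (f a)); have j7 := ff' (f b); have j8 := ff' (f (f' b)).
  have k1 := fnP a; have k2 := fnP (f a); have k3 := fnP b; have k4 := fnP (f' b).
  have k5 := fnP (f' a); have k6 := fnP (f' (f a)); have k7 := fnP (f b); have k8 := fnP (f (f' b)).
  have l1 := fnP' a; have l2 := fnP' (f a); have l3 := fnP' b; have l4 := fnP' (f' b).
  have l5 := fnP' (f' a); have l6 := fnP' (f' (f a)); have l7 := fnP' (f b); have l8 := fnP' (f (f' b)).
  have U : uniq s.
    rewrite /s /= !inE !negb_or.
    by repeat (apply/andP; split); try (apply/eqP; congruence).
  have Sub : s \subset [set x | f x != f' x].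
    apply/subsetP => t; rewrite inE /s !inE.
    by move=> /orP[/eqP->|/orP[/eqP->|/orP[/eqP->|/orP[/eqP->|/orP[/eqP->|/orP[/eqP->|
      /orP[/eqP->|/eqP->]]]]]]]; apply/eqP; congruence.
  have := subset_leq_card Sub; rewrite (card_uniqP U) /s /=. by move=> h; have := leq_ltn_trans h C; rewrite ltnn.
- case: (pickP (fun w => w \notin s)) => [w hw | none]; first by exists w.
  have Hs : [set: 'I_n] \subset [set x in s].
    by apply/subsetP => t _; rewrite inE; move: (none t) => /negbFE.
  have := subset_leq_card Hs; rewrite cardsT card_ord cardsE => hn.
  have := leq_trans hn (card_size s); rewrite /s /=; lia.
Qed.

Lemma two_steps (f f' : 'I_8 -> 'I_8) : invol f -> invol f' -> ~ Hcond f f' ->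
  exists f'', invol f'' /\ Hcond f f'' /\ Hcond f'' f'.
Proof.
move=> fi fi' nH; have [ff fn] := fi; have [ff' fn'] := fi'.
have [a [b [Da [Db [h1 [h2 [h3 [h4 [h5 [h6 [h7 [h8 cover]]]]]]]]]]]] :
  exists a b, f a <> f' a /\ f b <> f' b /\ a <> b /\ a <> f' b /\ f a <> b /\ f a <> f' b /\
   f' a <> f b /\ f' a <> f (f' b) /\ f' (f a) <> f b /\ f' (f a) <> f (f' b) /\
   forall w, w \in [:: a; f a; b; f' b; f' a; f' (f a); f b; f (f' b)].
  apply: NNPP => nE; apply: nH => a b Da Db h1 h2 h3 h4 h5 h6 h7 h8.
  apply: NNPP => nw; apply: nE; exists a, b; do 10 (split => //).
  by move=> w; apply/negPn/negP => hw; apply: nw; exists w.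
have fnP x : f x <> x by apply/eqP.
have fnP' x : f' x <> x by apply/eqP.
have Q : f (f' a) = f' (f a).
  have i1 := ff a; have i3 := ff b; have i4 := ff (f' b); have i5 := ff (f' a).
  have j1 := ff' a; have j3 := ff' b; have k5 := fnP (f' a); have l1 := fnP' a.
  move: (cover (f (f' a))); rewrite !inE.
  by move=> /orP[/eqP E|/orP[/eqP E|/orP[/eqP E|/orP[/eqP E|/orP[/eqP E|/orP[/eqP E|
      /orP[/eqP E|/eqP E]]]]]]]; try congruence.
have Q' : f (f' (f a)) = f' a by rewrite -Q ff.
pose X := [set x in [:: a; f a; f' a; f' (f a)]].
have cl x : x \in X -> (f x \in X) && (f' x \in X).
  rewrite !inE => /orP[/eqP->|/orP[/eqP->|/orP[/eqP->|/eqP->]]];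
  by rewrite ?ff ?ff' ?Q ?Q' !eqxx ?orbT.
pose g x := if x \in X then f' x else f x.
have gi : invol g.
  split=> x; rewrite /g.
  - case xX: (x \in X).
      by have /andP[_ ->] := cl x xX; rewrite ff'.
    case fX: (f x \in X); last by rewrite ff.
    by have /andP[+ _] := cl _ fX; rewrite ff xX.
  - by case: (x \in X).
have aX : a \in X by rewrite !inE eqxx.
have cX : (#|X| <= 4)%N by rewrite cardsE; apply: (leq_trans (card_size _)).
exists g; split => //; split; apply: crit_card => //; left.
- apply: (@leq_ltn_trans #|X|); last by apply: (leq_ltn_trans cX).
  apply: subset_leq_card; apply/subsetP => x; rewrite [in X in X -> _]inE /g.
  by case: (boolP (x \in X)) => // _; rewrite eqxx.
- apply: (@leq_ltn_trans #|~: X|).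
    apply: subset_leq_card; apply/subsetP => x; rewrite [in X in X -> _]inE /g.
    by case: (boolP (x \in X)) => xX; rewrite ?eqxx // inE xX.
  have := cardsC X; rewrite card_ord.
  have : (0 < #|X|)%N by apply/card_gt0P; exists a.
  lia.
Qed.

Definition tb (l : seq nat) (x : 'I_8) : 'I_8 :=
  nth ord0 [:: @Ordinal 8 0 isT; @Ordinal 8 1 isT; @Ordinal 8 2 isT; @Ordinal 8 3 isT;
               @Ordinal 8 4 isT; @Ordinal 8 5 isT; @Ordinal 8 6 isT; @Ordinal 8 7 isT]
      (nth 0%N l x).
Definition p0 := tb [:: 1; 0; 3; 2; 5; 4; 7; 6]%N.
Definition p1 := tb [:: 3; 2; 1; 0; 5; 4; 7; 6]%N.
Definition p2 := tb [:: 3; 2; 1; 0; 7; 6; 5; 4]%N.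

Lemma p_facts (x : 'I_8) : [&& p0 (p0 x) == x, p0 x != x, p1 (p1 x) == x, p1 x != x,
   p2 (p2 x) == x, p2 x != x & (p1 x == p0 x) || (p1 x == p2 x)].
Proof. by case: x => [[|[|[|[|[|[|[|[|k]]]]]]]] H]. Qed.

Definition bT (T : {set 'I_8}) (k : nat) := (inord k : 'I_8) \in T.

Lemma comb8 (T : {set 'I_8}) : odd #|T| ->
  (\sum_(x in T) (p1 x \notin T) != \sum_(x in T) (p0 x \notin T))%N ->
  (\sum_(x in T) (p2 x \notin T) != \sum_(x in T) (p0 x \notin T))%N.
Proof.
have bx (x : 'I_8) : (x \in T) = bT T x by rewrite /bT inord_val.
have sE (F : 'I_8 -> nat) :
    (\sum_(x in T) F x = \sum_(i < 8) (if bT T i then F i else 0))%N.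
  by rewrite big_mkcond; apply: eq_bigr => x _; rewrite bx.
rewrite -sum1_card !sE !big_ord_recl !big_ord0 !bx /= /bump /= ?add1n ?addn0.
by move: (bT T 0) (bT T 1) (bT T 2) (bT T 3) (bT T 4) (bT T 5) (bT T 6) (bT T 7)
  => [] [] [] [] [] [] [] [].
Qed.

Lemma in_cut_ends n (T : {set 'I_n}) a b (e : edge n) : a != b ->
  incident a e -> incident b e -> in_cut T e = ((a \in T) != (b \in T)).
Proof.
rewrite /incident /in_cut => ab /orP[]/eqP A /orP[]/eqP B.
all: try by rewrite A B.
all: try by rewrite A B eq_sym.
all: by move: ab; rewrite -A -B eqxx.
Qed.

Lemma cutM (R : realType) n (f : 'I_n -> 'I_n) (T : {set 'I_n}) : invol f ->
  \sum_(e | in_cut T e) chi R (Mof f) e = (\sum_(x in T) (f x \notin T : nat))%:R.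
Proof.
move=> fi; have [ff fn] := fi.
pose h e := if in_cut T e then chi R (Mof f) e else 0.
have := dcount T h.
have -> : \sum_e h e * (((val e).1 \in T) + ((val e).2 \in T))%:R =
    \sum_(e | in_cut T e) chi R (Mof f) e.
  rewrite [RHS]big_mkcond /=; apply: eq_bigr => e _; rewrite /h /in_cut.
  by case: (_ \in T); case: (_ \in T) => /=; rewrite ?mul0r ?mulr1.
move=> <-; rewrite natr_sum; apply: eq_bigr => v vT.
have vf : v != f v by rewrite eq_sym fn.
have [ev /andP[i1 i2]] := exE vf.
rewrite (sum_one (P := incident v) (h := h) i1).
  rewrite /h (in_cut_ends T vf i1 i2) vT /chi (Mof_ends fi vf i1 i2) eqxx.
  by case: (f v \in T).
move=> e ie ne; rewrite /h /chi.
have nM : e \notin Mof f.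
  apply/negP => eM; move/eqP: ne; apply.
  exact: (edge_uniq vf ie (incident_Mof fi ie eM) i1 i2).
by rewrite (negbTE nM); case: in_cut.
Qed.

Lemma suppB_scale (R : realType) n (c : edge n -> R) k : k != 0 ->
  suppB (fun e => k * c e) = suppB c.
Proof.
move=> k0; apply/setP => r; rewrite !inE; congr (_ && _).
case: r => [T|e] /=; last by rewrite !oppr_eq0 mulf_eq0 (negbTE k0).
by rewrite -mulr_sumr !oppr_eq0 mulf_eq0 (negbTE k0).
Qed.

Lemma circuit_scale (R : realType) n (c : edge n -> R) k : k != 0 -> circuit c ->
  circuit (fun e => k * c e).
Proof.
move=> k0 [cA [[e0 ce0] cm]]; split.
  by move=> v; rewrite -mulr_sumr cA mulr0.
split; first by exists e0; rewrite mulf_neq0.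
by move=> y yA ynz; rewrite suppB_scale //; exact: cm.
Qed.

Lemma p_inv0 : invol p0.
Proof. by split=> x; have /andP[/eqP ? /andP[? _]] := p_facts x. Qed.
Lemma p_inv1 : invol p1.
Proof. by split=> x; have /andP[_ /andP[_ /andP[/eqP ? /andP[? _]]]] := p_facts x. Qed.
Lemma p_inv2 : invol p2.
Proof.
by split=> x; have /andP[_ /andP[_ /andP[_ /andP[_ /andP[/eqP ? /andP[? _]]]]]] := p_facts x.
Qed.
Lemma p_12 x : (p1 x == p0 x) || (p1 x == p2 x).
Proof. by have /andP[_ /andP[_ /andP[_ /andP[_ /andP[_ /andP[_ ?]]]]]] := p_facts x. Qed.

Lemma lower8 (R : realType) : exists x y : edge 8 -> R,
  is_vertex x /\ is_vertex y /\ forall l, (l < 2)%N -> ~ circuit_walk l x y.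
Proof.
have i0 := p_inv0; have i1 := p_inv1; have i2 := p_inv2.
exists (chi R (Mof p0)), (chi R (Mof p2)).
split; first exact: chi_vertex (pm_Mof i0).
split; first exact: chi_vertex (pm_Mof i2).
have o01 : (@Ordinal 8 0 isT) != (@Ordinal 8 1 isT) by [].
have [e01 /andP[a01 b01]] := exE o01.
have o45 : (@Ordinal 8 4 isT) != (@Ordinal 8 5 isT) by [].
have [e45 /andP[a45 b45]] := exE o45.
have c0 : chi R (Mof p0) e01 = 1 by rewrite /chi (Mof_ends i0 o01 a01 b01).
have c1 : chi R (Mof p1) e01 = 0 by rewrite /chi (Mof_ends i1 o01 a01 b01).
have c2 : chi R (Mof p2) e01 = 0 by rewrite /chi (Mof_ends i2 o01 a01 b01).
have d0 : chi R (Mof p0) e45 = 1 by rewrite /chi (Mof_ends i0 o45 a45 b45).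
have d1 : chi R (Mof p1) e45 = 1 by rewrite /chi (Mof_ends i1 o45 a45 b45).
have d2 : chi R (Mof p2) e45 = 0 by rewrite /chi (Mof_ends i2 o45 a45 b45).
case=> [|[|//]] _.
  case=> z [z0 [zl _]]; have := congr1 (fun h => h e01) (etrans (esym z0) zl).
  by rewrite /= c0 c2 => /eqP; rewrite oner_eq0.
case=> z [z0 [z1 [_ zs]]]; have := zs 0%N isT; rewrite z0 z1.
case=> c [al [cc [al0 [_ [_ E]]]]].
have gE : gvec R p0 p2 = (fun e => al * c e).
  apply: functional_extensionality => e; rewrite /gvec E /=.
  by rewrite addrC addKr.
have := circuit_scale (lt0r_neq0 al0) cc; rewrite -gE.
case=> _ [_ cm].
have Y0 : nonzero (gvec R p0 p1).
  by exists e01; rewrite /gvec c0 c1 sub0r oppr_eq0 oner_eq0.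
have sub : suppB (gvec R p0 p1) \subset suppB (gvec R p0 p2).
  apply/subsetP => r; rewrite !inE => /andP[hr hY]; rewrite hr /=; move: hr hY.
  case: r => [T|e] /= hr.
    rewrite !oppr_eq0 /gvec !sumrB !(cutM _ _ i0) (cutM _ _ i1) (cutM _ _ i2).
    rewrite !subr_eq0 !eqr_nat; apply: comb8.
    by case/andP: hr.
  rewrite !oppr_eq0 /gvec /chi !in_Mof.
  by case/orP: (p_12 (val e).1) => /eqP ->; rewrite ?subrr ?eqxx.
have := cm _ (kerA_g R i0 i1) Y0 sub => /setP /(_ (inr e45)).
by rewrite !inE /= /gvec d0 d1 d2 subrr oppr0 eqxx sub0r !oppr_eq0 oner_eq0.
Qed.

Definition fA m (x : 'I_m.+1) : 'I_m.+1 :=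
  inord (if (x < m.+1./2)%N then (x + m.+1./2)%N else (x - m.+1./2)%N).
Definition fB m (x : 'I_m.+1) : 'I_m.+1 := inord (m - x).

Lemma half_ev m : ~~ odd m.+1 -> (m.+1./2 * 2 = m.+1)%N.
Proof. by move=> ev; have := odd_double_half m.+1; rewrite (negbTE ev) add0n muln2. Qed.

Lemma fA_val m (x : 'I_m.+1) : ~~ odd m.+1 ->
  nat_of_ord (fA x) = if (x < m.+1./2)%N then (x + m.+1./2)%N else (x - m.+1./2)%N.
Proof.
move=> ev; have hh := half_ev ev; rewrite /fA inordK //; have := ltn_ord x.
move: (m.+1./2) hh => h hh; case: ifP => H; lia.
Qed.

Lemma fA_invol m : ~~ odd m.+1 -> invol (@fA m).
Proof.
move=> ev; have hh := half_ev ev; split => x.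
- apply: ord_inj; rewrite !fA_val //; have := ltn_ord x.
  move: (m.+1./2) hh => h hh; case: (ltnP x h) => H1 /=; case: ifP => H2; lia.
- apply/eqP => E; have := congr1 (@nat_of_ord _) E; rewrite fA_val //; have := ltn_ord x.
  move: (m.+1./2) hh => h hh; case: ifP => H; lia.
Qed.

Lemma fB_val m (x : 'I_m.+1) : nat_of_ord (fB x) = (m - x)%N.
Proof. by rewrite /fB inordK // ltnS leq_subr. Qed.

Lemma fB_invol m : ~~ odd m.+1 -> invol (@fB m).
Proof.
move=> ev; split => x.
- by apply: ord_inj; rewrite !fB_val subKn // -ltnS.
- apply/eqP => E; have := congr1 (@nat_of_ord _) E; rewrite fB_val => E'.
  have hm : m = (x * 2)%N by have := ltn_ord x; lia.
  by move: ev; rewrite hm /= oddM andbF.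
Qed.

Lemma lower_gen (R : realType) n : ~~ odd n -> (4 <= n)%N ->
  exists x y : edge n -> R, is_vertex x /\ is_vertex y /\ x <> y.
Proof.
case: n => [//|m] ev h4.
have iA := fA_invol ev; have iB := fB_invol ev.
exists (chi R (Mof (@fA m))), (chi R (Mof (@fB m))).
split; first exact: chi_vertex (pm_Mof iA).
split; first exact: chi_vertex (pm_Mof iB).
have [ffA fnA] := iA.
set a : 'I_m.+1 := ord0.
have ab : a != fA a by rewrite eq_sym fnA.
have [e /andP[ia ib]] := exE ab.
have neq : fB a != fA a.
  apply/eqP => E; have := congr1 (@nat_of_ord _) E; rewrite fB_val fA_val //= subn0.
  have hh := half_ev ev; move: (m.+1./2) hh => h hh; case: ifP => H; lia.
move=> E; have := congr1 (fun h => h e) E.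
rewrite /= /chi (Mof_ends iA ab ia ib) (Mof_ends iB ab ia ib) eqxx (negbTE neq).
by move/eqP; rewrite oner_eq0.
Qed.

Unset Implicit Arguments.

Theorem theorem2 (R : realType) (n : nat) :
  ~~ odd n -> (4 <= n)%N ->
  circuit_diameter_Pperf R n (if n == 8%N then 2%N else 1%N).
Proof.
move=> ev h4; case: eqP => [n8|n8]; split.
- subst n; move=> x y /vertex_chi[M [pmM ->]] /vertex_chi[M' [pmM' ->]].
  have [f [fi ->]] := invol_of_pm pmM; have [f' [fi' ->]] := invol_of_pm pmM'.
  case: (classic (Hcond f f')) => HC.
    by have [l l1 w] := step R fi fi' HC; exists l => //; apply: (leq_trans l1).
  have [g [gi [H1 H2]]] := two_steps fi fi' HC.
  have [l1 h1 w1] := step R fi gi H1; have [l2 h2 w2] := step R gi fi' H2.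
  by exists (l1 + l2)%N; [lia | exact: walk_cat w1 w2].
- by subst n; exact: lower8.
- move=> x y /vertex_chi[M [pmM ->]] /vertex_chi[M' [pmM' ->]].
  have [f [fi ->]] := invol_of_pm pmM; have [f' [fi' ->]] := invol_of_pm pmM'.
  have HC : Hcond f f'.
    apply: crit_card fi fi' _; case: (ltnP 8 n) => h; [by right | left].
    apply: (leq_ltn_trans (max_card _)); rewrite card_ord.
    have : n <> 8%N by [].
    lia.
  by have [l l1 w] := step R fi fi' HC; exists l.
- have [x [y [vx [vy nxy]]]] := lower_gen R ev h4.
  exists x, y; split => //; split => //.
  move=> l; rewrite ltnS leqn0 => /eqP -> [z [z0 [z1 _]]].
  by apply: nxy; rewrite -z0 -z1.
Qed.
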